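(* Let $\kappa$ be an uncountable regular cardinal and $\mu>1$ a cardinal. Let $A$ be the set of all $x\in{}^\kappa\mu$ such that $x(\alpha)=0$ for only finitely many $\alpha<\kappa$. Then $A$ is a closed subset of ${}^\kappa\mu$ that is not a retract of ${}^\kappa\mu$ (i.e. there is no continuous $f:{}^\kappa\mu\to A$ with $f\restriction A=\mathrm{id}_A$).
   Context: ${}^\kappa\mu$ carries the topology whose basic open sets are $N_s=\{x\in{}^\kappa\mu : s\subseteq x\}$ for $s$ a function from some ordinal $\alpha<\kappa$ to $\mu$. *)

(* Defs.v *)
From Stdlib Require Import List.

(* kappa is represented by a type K with a strict order lt that is a
   well-order, whose order type is an uncountable regular cardinal. *)
Record regular_uncountable_cardinal (K : Type) (lt : K -> K -> Prop) : Prop := {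
  rc_irrefl : forall a, ~ lt a a;
  rc_trans : forall a b c, lt a b -> lt b c -> lt a c;
  rc_total : forall a b, lt a b \/ a = b \/ lt b a;
  rc_wf : well_founded lt;
  (* initial ordinal (cardinal): no injection of K into a proper initial segment *)
  rc_initial : forall a, ~ exists g : K -> K,
      (forall b, lt (g b) a) /\ (forall b c, g b = g c -> b = c);
  rc_regular : forall S : K -> Prop, (forall a, exists b, S b /\ ~ lt b a) ->
      exists g : K -> K, (forall b, S (g b)) /\ (forall b c, g b = g c -> b = c);
  rc_uncountable : ~ exists g : K -> nat, forall b c, g b = g c -> b = c
}.

(* Topology on K -> M (i.e. ^kappa mu): basic open sets
   N_s = {x | s subset x}, s : alpha -> mu, alpha < kappa. *)
Definition is_open {K M : Type} (lt : K -> K -> Prop) (U : (K -> M) -> Prop) : Prop :=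
  forall x, U x -> exists a : K,
    forall y : K -> M, (forall b, lt b a -> y b = x b) -> U y.

Definition is_closed {K M : Type} (lt : K -> K -> Prop) (C : (K -> M) -> Prop) : Prop :=
  is_open lt (fun x => ~ C x).

Definition continuous_map {K M : Type} (lt : K -> K -> Prop)
  (f : (K -> M) -> (K -> M)) : Prop :=
  forall U, is_open lt U -> is_open lt (fun x => U (f x)).

Definition finitely_many_zeros {K M : Type} (z : M) (x : K -> M) : Prop :=
  exists l : list K, forall a, x a = z -> In a l.

(* Main.v *)
Require Import Defs.
From Stdlib Require Import List.
From Stdlib Require Import Classical ClassicalEpsilon Lia Arith FinFun.

Lemma no_max (K : Type) (lt : K -> K -> Prop) :
  regular_uncountable_cardinal K lt -> forall a, exists b, lt a b.
Proof.
  intros H a. apply NNPP; intro Hn.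
  destruct (rc_regular _ _ H (fun b => b = a)) as [g [Hg Hinj]].
  { intro c. exists a. split; auto. intro Hac. apply Hn; eauto. }
  apply (rc_uncountable _ _ H). exists (fun _ => 0). intros b c _.
  apply Hinj. rewrite (Hg b), (Hg c). reflexivity.
Qed.

Lemma upper_list (K : Type) (lt : K -> K -> Prop) :
  regular_uncountable_cardinal K lt ->
  forall l a, exists c, lt a c /\ forall b, In b l -> lt b c.
Proof.
  intros H l. induction l as [|d l IH]; intros a.
  - destruct (no_max _ _ H a) as [c Hc]. exists c. split; auto. intros b [].
  - destruct (IH a) as [c [Hac Hc]].
    destruct (rc_total _ _ H c d) as [Hcd|[Hcd|Hcd]].
    + destruct (no_max _ _ H d) as [e He]. exists e. split.
      * eapply (rc_trans _ _ H); [exact Hac|]. eapply (rc_trans _ _ H); eauto.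
      * intros b [<-|Hb]; auto. eapply (rc_trans _ _ H); [apply Hc; auto|].
        eapply (rc_trans _ _ H); eauto.
    + subst d. destruct (no_max _ _ H c) as [e He]. exists e. split.
      * eapply (rc_trans _ _ H); eauto.
      * intros b [<-|Hb]; auto. eapply (rc_trans _ _ H); eauto.
    + destruct (no_max _ _ H c) as [e He]. exists e. split.
      * eapply (rc_trans _ _ H); eauto.
      * intros b [<-|Hb]. eapply (rc_trans _ _ H); eauto.
        eapply (rc_trans _ _ H); eauto.
Qed.

Lemma K_inh (K : Type) (lt : K -> K -> Prop) :
  regular_uncountable_cardinal K lt -> exists k : K, True.
Proof.
  intros H. apply NNPP; intro Hn. apply (rc_uncountable _ _ H).
  exists (fun _ => 0). intros b. exfalso; eauto.
Qed.

Lemma remove_one (K : Type) : forall (l : list K) a, In a l ->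
  exists l', length l' < length l /\ forall b, In b l -> b <> a -> In b l'.
Proof.
  induction l as [|d l IH]; simpl; intros a Ha; [contradiction|].
  destruct Ha as [<-|Ha].
  - exists l. split; [lia|]. intros b [<-|Hb] Hne; [congruence|auto].
  - destruct (IH a Ha) as [l' [Hlen Hl']]. exists (d :: l'). simpl. split; [lia|].
    intros b [<-|Hb] Hne; auto.
Qed.

Lemma min_exists : forall P : nat -> Prop, (exists n, P n) ->
  exists n, P n /\ forall m, P m -> n <= m.
Proof.
  intros P [n Hn]. induction n as [n IH] using (well_founded_induction Nat.lt_wf_0).
  destruct (classic (exists m, m < n /\ P m)) as [[m [Hm Pm]]|Hno].
  - apply (IH m Hm Pm).
  - exists n. split; auto. intros m Pm. destruct (le_lt_dec n m); auto.
    exfalso; apply Hno; eauto.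
Qed.

Lemma pigeon (K : Type) (al : nat -> K) (l : list K) :
  (forall m n, al m = al n -> m = n) -> (forall n, In (al n) l) -> False.
Proof.
  intros Hinj Hin.
  assert (HN : NoDup (map al (seq 0 (S (length l))))).
  { apply FinFun.Injective_map_NoDup. intros a b; apply Hinj. apply seq_NoDup. }
  assert (Hi : incl (map al (seq 0 (S (length l)))) l).
  { intros y Hy. apply in_map_iff in Hy. destruct Hy as [n [<- _]]. apply Hin. }
  pose proof (NoDup_incl_length HN Hi) as Hl.
  rewrite length_map, length_seq in Hl. lia.
Qed.

Lemma closed_part (K M : Type) (lt : K -> K -> Prop) (z : M) :
  regular_uncountable_cardinal K lt -> is_closed lt (finitely_many_zeros z).
Proof.
  intros H x Hx.
  apply NNPP; intro Hn.
  assert (F : forall a, exists l, forall b, lt b a -> x b = z -> In b l).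
  { intro a. apply NNPP; intro Hna. apply Hn. exists a. intros y Hy [l Hl].
    apply Hna. exists l. intros b Hb Hxb. apply Hl. rewrite Hy; auto. }
  destruct (classic (forall a, exists b, x b = z /\ ~ lt b a)) as [Hcof|Hncof].
  - destruct (rc_regular _ _ H (fun b => x b = z) Hcof) as [g [Hg Hinj]].
    set (cnt := fun a n => (exists l, length l = n /\ forall b, lt b a -> x b = z -> In b l)
        /\ forall m l, length l = m -> (forall b, lt b a -> x b = z -> In b l) -> n <= m).
    assert (Hc : forall a, exists n, cnt a n).
    { intro a. destruct (F a) as [l Hl].
      destruct (min_exists (fun n => exists l, length l = n /\ forall b, lt b a -> x b = z -> In b l))
        as [n [Hn1 Hn2]]; [eauto|].
      exists n. split; auto. intros m l' Hm Hl'. apply Hn2. eauto. }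
    assert (Hlt : forall a1 a2 n1 n2, lt a1 a2 -> x a1 = z -> cnt a1 n1 -> cnt a2 n2 -> n1 < n2).
    { intros a1 a2 n1 n2 H12 Hz [_ C1] [[l2 [Hl2 C2]] _].
      destruct (remove_one _ l2 a1 (C2 a1 H12 Hz)) as [l' [Hlen Hl']].
      assert (n1 <= length l').
      { apply (C1 _ l' eq_refl). intros b Hb Hxb. apply Hl'.
        - apply C2; auto. eapply (rc_trans _ _ H); eauto.
        - intro; subst b. eapply (rc_irrefl _ _ H); eauto. }
      lia. }
    apply (rc_uncountable _ _ H).
    exists (fun k => proj1_sig (constructive_indefinite_description _ (Hc (g k)))).
    intros b c Heq.
    destruct (constructive_indefinite_description _ (Hc (g b))) as [nb Hnb].
    destruct (constructive_indefinite_description _ (Hc (g c))) as [nc Hnc].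
    simpl in Heq. apply Hinj.
    destruct (rc_total _ _ H (g b) (g c)) as [Hbc|[Hbc|Hbc]]; auto.
    + pose proof (Hlt _ _ _ _ Hbc (Hg b) Hnb Hnc). lia.
    + pose proof (Hlt _ _ _ _ Hbc (Hg c) Hnc Hnb). lia.
  - apply not_all_ex_not in Hncof. destruct Hncof as [a Ha].
    destruct (F a) as [l Hl]. apply Hx. exists l. intros b Hb. apply Hl; auto.
    apply NNPP; intro Hnb. apply Ha. eauto.
Qed.

Theorem proposition1p4 (K M : Type) (lt : K -> K -> Prop) (z : M) :
  regular_uncountable_cardinal K lt ->
  (exists w : M, w <> z) ->
  is_closed lt (finitely_many_zeros z) /\
  ~ (exists f : (K -> M) -> (K -> M),
        continuous_map lt f /\
        (forall x, finitely_many_zeros z (f x)) /\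
        (forall x, finitely_many_zeros z x -> f x = x)).
Proof.
  intros H [w Hw]. split; [apply closed_part; auto|].
  intros [f [Hcont [HA Hret]]].
  set (xl := fun (l : list K) (b : K) =>
        if excluded_middle_informative (In b l) then z else w).
  assert (HxA : forall l, finitely_many_zeros z (xl l)).
  { intro l. exists l. intros a. unfold xl.
    destruct (excluded_middle_informative (In a l)); auto. intro; congruence. }
  destruct (K_inh _ _ H) as [k0 _].
  assert (Hnext : forall l, exists c, (forall b, In b l -> lt b c) /\
      forall y, (forall b, lt b c -> y b = xl l b) -> forall b, In b l -> f y b = z).
  { intro l.
    set (V := fun u : K -> M => forall b, In b l -> u b = z).
    assert (HV : is_open lt V).
    { intros u Hu. destruct (upper_list _ _ H l k0) as [c [_ Hc]].
      exists c. intros y Hy b Hb. rewrite Hy; auto. }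
    destruct (Hcont V HV (xl l)) as [a Ha].
    { unfold V. rewrite (Hret _ (HxA l)). intros b Hb. unfold xl.
      destruct (excluded_middle_informative (In b l)); tauto. }
    destruct (upper_list _ _ H l a) as [c [Hac Hc]].
    exists c. split; auto. intros y Hy. apply Ha. intros b Hb. apply Hy.
    eapply (rc_trans _ _ H); eauto. }
  set (next := fun l => proj1_sig (constructive_indefinite_description _ (Hnext l))).
  assert (Hnx : forall l, (forall b, In b l -> lt b (next l)) /\
      forall y, (forall b, lt b (next l) -> y b = xl l b) -> forall b, In b l -> f y b = z).
  { intro l. unfold next. destruct (constructive_indefinite_description _ (Hnext l)); auto. }
  clearbody next.
  set (L := fun n => nat_rect (fun _ => list K) nil (fun _ l => next l :: l) n).
  set (al := fun n => next (L n)).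
  assert (HL : forall n b, In b (L n) <-> exists m, m < n /\ b = al m).
  { induction n as [|n IH]; intros b; simpl.
    - split; [intros []|intros [m [Hm _]]; lia].
    - change (nat_rect (fun _ => list K) nil (fun _ l => next l :: l) n) with (L n).
      split.
      + intros [<-|Hb]. exists n; split; auto.
        apply IH in Hb. destruct Hb as [m [Hm ->]]. exists m; split; auto.
      + intros [m [Hm ->]]. destruct (Nat.eq_dec m n) as [->|Hne]; [left; reflexivity|].
        right. apply IH. exists m; split; [lia|auto]. }
  assert (Hmono : forall m n, m < n -> lt (al m) (al n)).
  { intros m n Hmn. apply (proj1 (Hnx (L n))). apply HL. eauto. }
  assert (Hinj : forall m n, al m = al n -> m = n).
  { intros m n Heq. destruct (Nat.lt_trichotomy m n) as [h|[h|h]]; auto;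
    exfalso; apply Hmono in h; rewrite Heq in h; eapply (rc_irrefl _ _ H); eauto. }
  set (y := fun b => if excluded_middle_informative (exists m, b = al m) then z else w).
  assert (Hy : forall n b, lt b (al n) -> y b = xl (L n) b).
  { intros n b Hb. unfold y, xl.
    destruct (excluded_middle_informative (In b (L n))) as [Hi|Hni];
    destruct (excluded_middle_informative (exists m, b = al m)) as [[m Hbm]|Hno]; auto.
    - exfalso. apply HL in Hi. destruct Hi as [m [_ ->]]. eauto.
    - exfalso. subst b. apply Hni. apply HL. exists m. split; auto.
      destruct (Nat.lt_ge_cases m n) as [h|h]; auto. exfalso.
      destruct (Nat.eq_dec m n) as [->|Hne].
      + eapply (rc_irrefl _ _ H); eauto.
      + assert (n < m) as h' by lia. apply Hmono in h'.
        eapply (rc_irrefl _ _ H). eapply (rc_trans _ _ H); eauto. }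
  destruct (HA y) as [l Hl].
  apply (pigeon _ al l Hinj). intro n. apply Hl.
  apply (proj2 (Hnx (L (S n))) y).
  - intros b Hb. apply Hy; auto.
  - apply HL. exists n; split; auto.
Qed.
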